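(* Let $M\ge1$, let $\tau=(c,c,\ldots,c)\in\mathbb{R}^{M+1}_{>0}$ be a constant $M$-layer travel time vector and $\tau'=(c,\ldots,c)\in\mathbb{R}^{M+2}_{>0}$ its extension to a constant $(M+1)$-layer vector. Let $\mathcal{R}\subset(-1,1)^{M+1}$ be the set of all $R=(R_0,\ldots,R_M)$ for which there exists a nonzero $R_{M+1}\in(-1,1)$ such that, with $R'=(R_0,\ldots,R_{M+1})$, the models $(\tau,R)$ and $(\tau',R')$ have the same data, i.e. $D^{(\tau,R)}=D^{(\tau',R')}$ as measures. Then $\mathcal{R}$ has positive Lebesgue measure in $\mathbb{R}^{M+1}$.
   Context: An $N$-layer model ($N\ge1$) is $(\tau,R)$ with $\tau\in\mathbb{R}^{N+1}_{>0}$, $R\in(-1,1)^{N+1}$. $\mathfrak{L}_N\subset\mathbb{Z}^{N+1}_{\geq0}$: all $k$ with $k_0=1$ and $k_n>0\Rightarrow k_{n-1}>0$ ($1\le n\le N$); $\mathfrak{L}^\tau_N=\{k\in\mathfrak{L}_N:\langle k,\tau\rangle\le\langle\mathbb{1},\tau\rangle\}$. Amplitude polynomial: $\mathbb{1}=(1,\ldots,1)$; inequalities and $\min$ entrywise; $x^k=\prod_n x_n^{k_n}$, $\binom{k}{b}=\prod_n\binom{k_n}{b_n}$; $\tilde k=(k_1,\ldots,k_N,0)$, $u=\min\{\mathbb{1},\tilde k\}$, $V(k)=\{b:u\le b\le\min\{k,\tilde k\}\}$, $a(x,k)=\sum_{b\in V(k)}\binom{k}{b}\binom{\tilde k-u}{b-u}(-x)^{\tilde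 k-b}x^{k-b}\prod_n(1-x_n^2)^{b_n}$. The data of an $N$-layer model is the discrete measure $D^{(\tau,R)}(t)=\sum_{k\in\mathfrak{L}^\tau_N}a(R,k)\delta(t-\langle k,\tau\rangle)$ (equal to the truncated impulse response $\chi_{[0,|\tau|]}G^{(\tau,R)}$ of the layered medium, $|\tau|=\sum_n\tau_n$). *)

(* Defs.v *)
From Stdlib Require Import Bool Reals Lra Lia Arith List ClassicalEpsilon.
Import ListNotations.
Open Scope R_scope.

(* Vectors in R^{N+1} (resp. Z_{>=0}^{N+1}) are represented as functions
   on nat, of which only the indices 0..N are used. *)
Definition rvec := nat -> R.
Definition nvec := nat -> nat.

Definition sumL {A : Type} (f : A -> R) (l : list A) : R :=
  fold_right (fun x acc => f x + acc) 0 l.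

Fixpoint prodR (f : nat -> R) (N : nat) : R :=
  match N with
  | O => f O
  | S n => prodR f n * f (S n)
  end.

Fixpoint boxes (lo hi : nat -> nat) (n : nat) : list (list nat) :=
  match n with
  | O => [ [] ]
  | S m => flat_map (fun l => map (fun v => l ++ [v])
                                   (seq (lo m) (S (hi m) - lo m)))
                     (boxes lo hi m)
  end.

Definition of_list (l : list nat) : nvec := fun i => nth i l O.

Definition ktil (N : nat) (k : nvec) : nvec :=
  fun n => if (n <? N)%nat then k (S n) else O.

Definition uvec (N : nat) (k : nvec) : nvec := fun n => Nat.min 1 (ktil N k n).

Definition ampl (N : nat) (x : rvec) (k : nvec) : R :=
  let kt := ktil N k in
  let u := uvec N k in
  sumL (fun bl =>
          let b := of_list bl in
          prodR (fun n =>
                   C (k n) (b n) * C (kt n - u n) (b n - u n)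
                   * (- x n) ^ (kt n - b n) * (x n) ^ (k n - b n)
                   * (1 - (x n) ^ 2) ^ (b n)) N)
       (boxes u (fun n => Nat.min (k n) (kt n)) (S N)).

Definition dotk (N : nat) (k : nvec) (tau : rvec) : R :=
  sum_f_R0 (fun n => INR (k n) * tau n) N.
Definition tot (N : nat) (tau : rvec) : R := sum_f_R0 tau N.

Definition inL (N : nat) (k : nvec) : bool :=
  (k O =? 1)%nat &&
  forallb (fun n => negb (0 <? k n)%nat || (0 <? k (n - 1))%nat) (seq 1 N).

Definition inLtau (N : nat) (tau : rvec) (k : nvec) : bool :=
  inL N k && (if Rle_dec (dotk N k tau) (tot N tau) then true else false).

(* A finite candidate list containing L^tau_N when tau > 0:
   k_n tau_n <= |tau| forces k_n <= |tau|/tau_n < up(|tau|/tau_n). *)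
Definition cand (N : nat) (tau : rvec) : list (list nat) :=
  boxes (fun _ => O) (fun n => Z.to_nat (up (tot N tau / tau n))) (S N).

Definition Ltau_list (N : nat) (tau : rvec) : list nvec :=
  map of_list (filter (fun l => inLtau N tau (of_list l)) (cand N tau)).

(* The data D^{(tau,R)} as a (finite, discrete) measure on subsets of R:
   D(A) = sum_{k in L^tau_N, <k,tau> in A} a(R,k). *)
Definition data (N : nat) (tau Rc : rvec) (A : R -> Prop) : R :=
  sumL (fun k => if excluded_middle_informative (A (dotk N k tau))
                 then ampl N Rc k else 0)
       (Ltau_list N tau).

Definition same_data (N : nat) (tau Rc : rvec) (N' : nat) (tau' Rc' : rvec) : Prop :=
  forall A : R -> Prop, data N tau Rc A = data N' tau' Rc' A.

Definition in_box (d : nat) (a b : rvec) (x : rvec) : Prop :=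
  forall i, (i < d)%nat -> a i <= x i <= b i.

Fixpoint vol (d : nat) (a b : rvec) : R :=
  match d with
  | O => 1
  | S m => vol m a b * Rmax 0 (b m - a m)
  end.

Definition outer_lt (d : nat) (S : rvec -> Prop) (eps : R) : Prop :=
  exists (a b : nat -> rvec),
    (forall x, S x -> exists j, in_box d (a j) (b j) x) /\
    exists s, s < eps /\ forall n, sum_f_R0 (fun j => vol d (a j) (b j)) n <= s.

Definition null_set (d : nat) (S : rvec -> Prop) : Prop :=
  forall eps, 0 < eps -> outer_lt d S eps.

Definition open_set (d : nat) (G : rvec -> Prop) : Prop :=
  forall x, G x -> exists delta, 0 < delta /\
    forall y, (forall i, (i < d)%nat -> Rabs (y i - x i) < delta) -> G y.

Definition lebesgue_measurable (d : nat) (S : rvec -> Prop) : Prop :=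
  forall eps, 0 < eps -> exists G, open_set d G /\ (forall x, S x -> G x) /\
    outer_lt d (fun x => G x /\ ~ S x) eps.

Definition positive_measure (d : nat) (S : rvec -> Prop) : Prop :=
  lebesgue_measurable d S /\ ~ null_set d S.

Definition extend (M : nat) (Rc : rvec) (r : R) : rvec :=
  fun n => if (n <=? M)%nat then Rc n else r.

(* Main.v *)
Require Import Defs.
From Stdlib Require Import Bool Reals Lra Lia Arith ZArith List Permutation ClassicalEpsilon Classical FunctionalExtensionality.
Import ListNotations.
Open Scope R_scope.


Lemma sumL_nil {A} (f : A -> R) : sumL f [] = 0.
Proof. reflexivity. Qed.
Lemma sumL_cons {A} (f : A -> R) x l : sumL f (x :: l) = f x + sumL f l.
Proof. reflexivity. Qed.
Lemma sumL_app {A} (f : A -> R) l1 l2 : sumL f (l1 ++ l2) = sumL f l1 + sumL f l2.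
Proof. induction l1; simpl; [lra|]. unfold sumL in *; simpl. rewrite IHl1; lra. Qed.
Lemma sumL_map {A B} (f : B -> R) (g : A -> B) l : sumL f (map g l) = sumL (fun x => f (g x)) l.
Proof. induction l; simpl; auto. unfold sumL in *; simpl. now rewrite IHl. Qed.
Lemma sumL_flat_map {A B} (f : B -> R) (g : A -> list B) l :
  sumL f (flat_map g l) = sumL (fun x => sumL f (g x)) l.
Proof. induction l; simpl; auto. rewrite sumL_app, IHl. reflexivity. Qed.
Lemma sumL_ext {A} (f g : A -> R) l : (forall x, In x l -> f x = g x) -> sumL f l = sumL g l.
Proof. induction l; intros H; simpl; auto. unfold sumL in *; simpl.
  rewrite H by (left; auto). rewrite IHl; auto. intros; apply H; right; auto. Qed.
Lemma sumL_filter {A} (f : A -> R) p l : sumL f (filter p l) = sumL (fun x => if p x then f x else 0) l.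
Proof. induction l; [reflexivity|]. cbn [filter]. rewrite sumL_cons. destruct (p a); rewrite ?sumL_cons, IHl; lra. Qed.
Lemma sumL_perm {A} (f : A -> R) l1 l2 : Permutation l1 l2 -> sumL f l1 = sumL f l2.
Proof. induction 1; rewrite ?sumL_cons; try lra; congruence. Qed.
Lemma sumL_plus {A} (f g : A -> R) l : sumL (fun x => f x + g x) l = sumL f l + sumL g l.
Proof. induction l; rewrite ?sumL_cons, ?sumL_nil; try lra. Qed.
Lemma sumL_zero {A} (f : A -> R) l : (forall x, In x l -> f x = 0) -> sumL f l = 0.
Proof. intros H. rewrite (sumL_ext f (fun _ => 0)) by auto. clear H; induction l; rewrite ?sumL_cons, ?sumL_nil; lra. Qed.

Lemma sumL_nz {A} (f : A -> R) l :
  sumL f l = sumL f (filter (fun x => if Req_EM_T (f x) 0 then false else true) l).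
Proof. rewrite sumL_filter. apply sumL_ext; intros. destruct (Req_EM_T (f x) 0); auto. Qed.

Lemma sumL_support {A} (f : A -> R) l1 l2 : NoDup l1 -> NoDup l2 ->
  (forall x, f x <> 0 -> (In x l1 <-> In x l2)) -> sumL f l1 = sumL f l2.
Proof.
  intros N1 N2 H. rewrite (sumL_nz f l1), (sumL_nz f l2). apply sumL_perm.
  apply NoDup_Permutation; try apply NoDup_filter; auto.
  intros x. rewrite !filter_In. destruct (Req_EM_T (f x) 0); [split; intros [_ Hc]; discriminate|].
  specialize (H x n). tauto.
Qed.

Lemma sumL_single {A} (f : A -> R) l x : NoDup l -> In x l ->
  (forall y, y <> x -> f y = 0) -> sumL f l = f x.
Proof.
  intros N I H. rewrite (sumL_support f l [x]); auto.
  - simpl. lra.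
  - constructor; [simpl; tauto | constructor].
  - intros y Hy. assert (y = x) by (apply NNPP; intro; apply Hy, H; auto). subst. simpl; tauto.
Qed.

Lemma boxes_S lo hi n : boxes lo hi (S n) =
  flat_map (fun l => map (fun v => l ++ [v]) (seq (lo n) (S (hi n) - lo n))) (boxes lo hi n).
Proof. reflexivity. Qed.

Lemma boxes_In lo hi n l : In l (boxes lo hi n) <->
  (length l = n /\ forall i, (i < n)%nat -> (lo i <= nth i l 0 <= hi i)%nat).
Proof.
  revert l; induction n; intros l.
  - simpl. split.
    + intros [<-|[]]. split; auto. intros; lia.
    + intros [H _]. destruct l; [auto|simpl in H; lia].
  - rewrite boxes_S, in_flat_map. split.
    + intros [l0 [Hl0 Hm]]. apply in_map_iff in Hm. destruct Hm as [v [<- Hv]].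
      apply in_seq in Hv. apply IHn in Hl0. destruct Hl0 as [Hlen Hb].
      rewrite length_app; simpl; split; [lia|]. intros i Hi.
      destruct (Nat.eq_dec i n).
      * subst. rewrite app_nth2 by lia. rewrite Nat.sub_diag. simpl. lia.
      * rewrite app_nth1 by lia. apply Hb; lia.
    + intros [Hlen Hb]. destruct (exists_last (l:=l)) as [l' [a Ha]].
      { intro; subst; simpl in Hlen; lia. }
      subst l. rewrite length_app in Hlen; simpl in Hlen.
      exists l'. split.
      * apply IHn. split; [lia|]. intros i Hi. specialize (Hb i ltac:(lia)).
        rewrite app_nth1 in Hb by lia. auto.
      * apply in_map_iff. exists a; split; auto. apply in_seq.
        specialize (Hb n ltac:(lia)). rewrite app_nth2 in Hb by lia.
        replace (n - length l')%nat with 0%nat in Hb by lia; simpl in Hb. lia.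
Qed.

Lemma NoDup_flat_map' {A B} (g : A -> list B) l : NoDup l -> (forall x, NoDup (g x)) ->
  (forall x y z, In x l -> In y l -> In z (g x) -> In z (g y) -> x = y) -> NoDup (flat_map g l).
Proof.
  induction l; intros N Ng H; simpl; [constructor|].
  inversion N; subst. apply NoDup_app; auto.
  - apply IHl; auto. intros; eapply H; eauto; right; auto.
  - intros z Hz Hz'. apply in_flat_map in Hz'. destruct Hz' as [y [Hy Hzy]].
    assert (a = y) by (eapply H; eauto; [left|right]; auto). subst. auto.
Qed.

Lemma boxes_NoDup lo hi n : NoDup (boxes lo hi n).
Proof.
  induction n; simpl. constructor; [simpl; auto| constructor].
  apply NoDup_flat_map'; auto.
  - intros x. apply FinFun.Injective_map_NoDup; [|apply seq_NoDup].
    intros a b Hab. apply app_inj_tail in Hab. tauto.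
  - intros x y z _ _ Hx Hy. apply in_map_iff in Hx, Hy.
    destruct Hx as [a [<- _]]. destruct Hy as [b [Hb _]]. apply app_inj_tail in Hb. symmetry; tauto.
Qed.

Lemma boxes_ext lo hi lo' hi' n : (forall i, (i < n)%nat -> lo i = lo' i /\ hi i = hi' i) ->
  boxes lo hi n = boxes lo' hi' n.
Proof.
  induction n; intros H; auto. rewrite !boxes_S. rewrite IHn by (intros; apply H; lia).
  destruct (H n ltac:(lia)) as [-> ->]. reflexivity.
Qed.

Lemma boxes_single lo hi n : (forall i, (i < n)%nat -> lo i = hi i) ->
  boxes lo hi n = [map lo (seq 0 n)].
Proof.
  induction n; intros H; auto. rewrite boxes_S, IHn by (intros; apply H; lia).
  rewrite (H n ltac:(lia)). replace (S (hi n) - hi n)%nat with 1%nat by lia.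
  rewrite (seq_S n 0), map_app. cbn [seq flat_map map app]. rewrite Nat.add_0_l, (H n ltac:(lia)). reflexivity.
Qed.

Lemma of_list_map_seq f m n : (n < m)%nat -> of_list (map f (seq 0 m)) n = f n.
Proof.
  intros H. unfold of_list. rewrite (nth_indep _ _ (f 0%nat)) by (rewrite length_map, length_seq; lia).
  rewrite map_nth, seq_nth by lia. reflexivity.
Qed.

Lemma of_list_app0 l : of_list (l ++ [0%nat]) = of_list l.
Proof.
  apply functional_extensionality; intros n. unfold of_list.
  destruct (Nat.lt_ge_cases n (length l)).
  - rewrite app_nth1; auto.
  - rewrite app_nth2 by auto. rewrite (nth_overflow l) by auto.
    destruct (n - length l)%nat as [|[|]]; reflexivity.
Qed.

Lemma sumL_single_in {A} (f : A -> R) l x : NoDup l -> In x l ->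
  (forall y, In y l -> y <> x -> f y = 0) -> sumL f l = f x.
Proof.
  induction l as [|a l IH]; intros N I H; [destruct I|].
  inversion N; subst. rewrite sumL_cons. destruct (classic (a = x)).
  - subst. rewrite sumL_zero; [lra|]. intros y Hy. apply H; [right; auto|]. intro; subst; contradiction.
  - rewrite H by (try left; auto). destruct I as [I|I]; [contradiction|].
    rewrite IH; auto; [lra|]. intros y Hy. apply H; right; auto.
Qed.


Fixpoint sumk (k : nvec) (N : nat) : nat :=
  match N with O => k O | S n => (sumk k n + k (S n))%nat end.

Lemma dotk_c N k c : dotk N k (fun _ => c) = INR (sumk k N) * c.
Proof. unfold dotk. induction N; simpl sum_f_R0; simpl sumk; [auto|].
  rewrite IHN, plus_INR. ring. Qed.

Lemma tot_c N c : tot N (fun _ => c) = INR (S N) * c.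
Proof. unfold tot. induction N; simpl sum_f_R0; [simpl; ring|].
  rewrite IHN. rewrite (S_INR (S N)). ring. Qed.

Lemma up_INR n : up (INR n) = (Z.of_nat n + 1)%Z.
Proof. symmetry. apply tech_up; rewrite plus_IZR, <- INR_IZR_INZ; simpl; lra. Qed.

Lemma cand_c N c : 0 < c -> cand N (fun _ => c) = boxes (fun _ => 0%nat) (fun _ => S (S N)) (S N).
Proof.
  intros Hc. unfold cand. apply boxes_ext. intros i _. split; auto.
  rewrite tot_c. replace (INR (S N) * c / c) with (INR (S N)) by (field; lra).
  rewrite up_INR. lia.
Qed.

Lemma inLtau_c N c k : 0 < c -> inLtau N (fun _ => c) k = inL N k && (sumk k N <=? S N)%nat.
Proof.
  intros Hc. unfold inLtau. rewrite dotk_c, tot_c.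
  destruct (Rle_dec _ _) as [H|H]; destruct (Nat.leb_spec (sumk k N) (S N)) as [H'|H'].
  - auto.
  - apply Rmult_le_reg_r in H; auto. apply INR_le in H. lia.
  - exfalso; apply H. apply Rmult_le_compat_r; [lra|]. apply le_INR; auto.
  - auto.
Qed.

Definition hterm (N : nat) (c : R) (Rc : rvec) (A : R -> Prop) (l : list nat) : R :=
  if inL N (of_list l) && (sumk (of_list l) N <=? S N)%nat then
    (if excluded_middle_informative (A (INR (sumk (of_list l) N) * c)) then ampl N Rc (of_list l) else 0)
  else 0.

Lemma data_c N c Rc A : 0 < c ->
  data N (fun _ => c) Rc A = sumL (hterm N c Rc A) (boxes (fun _ => 0%nat) (fun _ => S (S N)) (S N)).
Proof.
  intros Hc. unfold data, Ltau_list. rewrite sumL_map, sumL_filter, cand_c by auto.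
  apply sumL_ext; intros l _. unfold hterm. rewrite inLtau_c by auto. rewrite dotk_c. reflexivity.
Qed.


Lemma C_n0 n : C n 0 = 1.
Proof. unfold C. rewrite Nat.sub_0_r. simpl fact. rewrite Rmult_1_l. field. apply INR_fact_neq_0. Qed.
Lemma C_nn n : C n n = 1.
Proof. unfold C. rewrite Nat.sub_diag. simpl fact. rewrite Rmult_1_r. field. apply INR_fact_neq_0. Qed.

Lemma prodR_S f n : prodR f (S n) = prodR f n * f (S n).
Proof. reflexivity. Qed.
Lemma prodR_ext f g N : (forall n, (n <= N)%nat -> f n = g n) -> prodR f N = prodR g N.
Proof. induction N; intros H; simpl. apply H; lia. rewrite IHN by (intros; apply H; lia). rewrite H by lia; auto. Qed.
Lemma prodR_zero f N n : (n <= N)%nat -> f n = 0 -> prodR f N = 0.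
Proof. induction N; intros Hn Hf; simpl.
  - replace n with 0%nat in Hf by lia; auto.
  - destruct (Nat.eq_dec n (S N)). subst; rewrite Hf; ring. rewrite (IHN ltac:(lia) Hf); ring. Qed.
Lemma prodR_two f N : (1 <= N)%nat -> (forall n, (2 <= n <= N)%nat -> f n = 1) -> prodR f N = f 0%nat * f 1%nat.
Proof. induction N; intros H1 H; [lia|]. destruct N. reflexivity.
  rewrite prodR_S, IHN by (try intros; try apply H; lia). rewrite (H (S (S N))) by lia. ring. Qed.

Lemma flat_map_single {A B} (g : A -> B) (l : list A) :
  flat_map (fun x => map (fun v => g x) [0%nat]) l = map g l.
Proof. induction l; simpl; auto. Qed.

Lemma ampl_ext0 M R r k : k (S M) = 0%nat -> ampl (S M) (extend M R r) k = ampl M R k.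
Proof.
  intros H. unfold ampl. cbv zeta.
  assert (Hkt : ktil (S M) k = ktil M k).
  { apply functional_extensionality; intros n. unfold ktil.
    destruct (Nat.ltb_spec n (S M)); destruct (Nat.ltb_spec n M); auto; try lia.
    replace n with M by lia. auto. }
  assert (Hu : uvec (S M) k = uvec M k) by (unfold uvec; rewrite Hkt; auto).
  rewrite Hkt, Hu, boxes_S.
  assert (E1 : ktil M k (S M) = 0%nat) by (unfold ktil; destruct (Nat.ltb_spec (S M) M); auto; lia).
  assert (E2 : uvec M k (S M) = 0%nat) by (unfold uvec; rewrite E1; auto).
  cbv beta. rewrite E1, E2, H. change (seq 0 (S (Nat.min 0 0) - 0)) with [0%nat].
  rewrite (flat_map_single (fun l => l ++ [0%nat])), sumL_map. apply sumL_ext.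
  intros bl Hbl. apply boxes_In in Hbl. destruct Hbl as [Hlen _].
  rewrite of_list_app0, prodR_S.
  assert (E3 : of_list bl (S M) = 0%nat) by (unfold of_list; apply nth_overflow; lia).
  rewrite H, E1, E2, E3. simpl (0 - 0)%nat. rewrite C_n0, !pow_O, Rmult_1_r, !Rmult_1_r.
  apply prodR_ext. intros n Hn. unfold extend. destruct (Nat.leb_spec n M); [auto|lia].
Qed.


Lemma inL_spec N k : inL N k = true <->
  (k 0%nat = 1%nat /\ forall n, (1 <= n <= N)%nat -> k n = 0%nat \/ (0 < k (n-1))%nat).
Proof.
  unfold inL. rewrite andb_true_iff, Nat.eqb_eq, forallb_forall.
  split; intros [H0 H]; split; auto; intros n Hn.
  - specialize (H n ltac:(apply in_seq; lia)). apply orb_true_iff in H.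
    destruct H as [H|H]; [left; apply negb_true_iff, Nat.ltb_ge in H; lia | right; apply Nat.ltb_lt; auto].
  - apply in_seq in Hn. specialize (H n ltac:(lia)). apply orb_true_iff.
    destruct H as [H|H]; [left; apply negb_true_iff, Nat.ltb_ge; lia | right; apply Nat.ltb_lt; auto].
Qed.

Lemma inL_pos N k : inL N k = true -> forall n, (n <= N)%nat -> (0 < k n)%nat ->
  forall m, (m <= n)%nat -> (0 < k m)%nat.
Proof.
  intros H. apply inL_spec in H. destruct H as [H0 H].
  induction n; intros Hn Hk m Hm.
  - replace m with 0%nat by lia. lia.
  - destruct (Nat.eq_dec m (S n)); [subst; auto|].
    apply IHn; try lia. destruct (H (S n) ltac:(lia)) as [E|E]; [lia|].
    replace (S n - 1)%nat with n in E by lia. auto.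
Qed.

Lemma inL_S0 N k : k (S N) = 0%nat -> inL (S N) k = inL N k.
Proof.
  intros H. apply eq_iff_eq_true. rewrite !inL_spec. split; intros [H0 H1]; split; auto; intros n Hn.
  - apply H1; lia.
  - destruct (Nat.eq_dec n (S N)); [left; subst; auto|]. apply H1; lia.
Qed.

Lemma inL_all1 N k : k 0%nat = 1%nat -> (forall n, (n <= N)%nat -> (1 <= k n)%nat) -> inL N k = true.
Proof. intros H0 H. apply inL_spec. split; auto. intros n Hn. right. specialize (H (n-1)%nat ltac:(lia)). lia. Qed.

Lemma sumk_ext N k k' : (forall n, (n <= N)%nat -> k n = k' n) -> sumk k N = sumk k' N.
Proof. induction N; intros H; simpl. apply H; lia. rewrite IHN by (intros; apply H; lia). rewrite H by lia. auto. Qed.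
Lemma sumk_ge N k i : (i <= N)%nat -> (k i <= sumk k N)%nat.
Proof. induction N; intros H; simpl. replace i with 0%nat by lia; lia.
  destruct (Nat.eq_dec i (S N)); [subst; lia|]. specialize (IHN ltac:(lia)); lia. Qed.
Lemma sumk_pos N k : (forall n, (n <= N)%nat -> (1 <= k n)%nat) -> (S N <= sumk k N)%nat.
Proof. induction N; intros H; simpl. apply H; lia. specialize (IHN ltac:(intros; apply H; lia)).
  specialize (H (S N) ltac:(lia)). lia. Qed.
Lemma sumk_pos_eq N k : (forall n, (n <= N)%nat -> (1 <= k n)%nat) -> sumk k N = S N ->
  forall n, (n <= N)%nat -> k n = 1%nat.
Proof. induction N; intros H E n Hn; simpl in E. replace n with 0%nat by lia; lia.
  pose proof (sumk_pos N k ltac:(intros; apply H; lia)). pose proof (H (S N) ltac:(lia)).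
  destruct (Nat.eq_dec n (S N)); [subst; lia|]. apply IHN; try lia. intros; apply H; lia. Qed.
Lemma sumk_two N k : (1 <= N)%nat -> (forall n, (2 <= n <= N)%nat -> k n = 0%nat) -> sumk k N = (k 0%nat + k 1%nat)%nat.
Proof. induction N; intros H1 H; [lia|]. destruct N; [reflexivity|].
  simpl sumk. simpl sumk in IHN. rewrite IHN by (try intros; try apply H; lia). rewrite (H (S (S N))) by lia. lia. Qed.

Lemma of_list_app_last l v : of_list (l ++ [v]) (length l) = v.
Proof. unfold of_list. rewrite app_nth2 by lia. rewrite Nat.sub_diag. reflexivity. Qed.
Lemma of_list_app_lt l v i : (i < length l)%nat -> of_list (l ++ [v]) i = of_list l i.
Proof. intros. unfold of_list. rewrite app_nth1; auto. Qed.

Lemma hterm_top M c R' A l v : length l = S M -> (1 <= v)%nat ->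
  hterm (S M) c R' A (l ++ [v]) <> 0 -> v = 1%nat /\ l = repeat 1%nat (S M).
Proof.
  intros Hl Hv H. unfold hterm in H.
  destruct (inL (S M) (of_list (l ++ [v])) && (sumk (of_list (l ++ [v])) (S M) <=? S (S M)))%nat eqn:E;
    [|lra].
  apply andb_true_iff in E. destruct E as [E1 E2]. apply Nat.leb_le in E2.
  set (k := of_list (l ++ [v])) in *.
  assert (Hkv : k (S M) = v) by (unfold k; rewrite <- Hl; apply of_list_app_last).
  assert (Hpos : forall m, (m <= S M)%nat -> (0 < k m)%nat)
    by (intros; apply (inL_pos (S M) k E1 (S M)); try rewrite Hkv; lia).
  simpl sumk in E2. rewrite Hkv in E2.
  pose proof (sumk_pos M k ltac:(intros; apply Hpos; lia)).
  split; [lia|].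
  assert (E3 : sumk k M = S M) by lia.
  pose proof (sumk_pos_eq M k ltac:(intros; apply Hpos; lia) E3) as Hone.
  apply (nth_ext _ _ 0%nat 0%nat). rewrite repeat_length; auto.
  intros n Hn. rewrite nth_repeat_lt by lia.
  specialize (Hone n ltac:(lia)). unfold k in Hone. rewrite of_list_app_lt in Hone by lia. exact Hone.
Qed.


Lemma ampl_ones M R r k : (forall n, (n <= S M)%nat -> k n = 1%nat) ->
  ampl (S M) (extend M R r) k = r * prodR (fun n => 1 - R n ^ 2) M.
Proof.
  intros Hk. unfold ampl. cbv zeta.
  assert (Hkt : forall n, (n <= M)%nat -> ktil (S M) k n = 1%nat)
    by (intros n Hn; unfold ktil; destruct (Nat.ltb_spec n (S M)); [apply Hk|]; lia).
  assert (Hkt' : ktil (S M) k (S M) = 0%nat) by (unfold ktil; destruct (Nat.ltb_spec (S M) (S M)); lia).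
  assert (Hu : forall n, (n <= M)%nat -> uvec (S M) k n = 1%nat) by (intros; unfold uvec; rewrite Hkt; auto).
  assert (Hu' : uvec (S M) k (S M) = 0%nat) by (unfold uvec; rewrite Hkt'; auto).
  rewrite boxes_single.
  2:{ intros i Hi. destruct (Nat.eq_dec i (S M)).
      - subst. rewrite Hu', Hkt'. lia.
      - rewrite Hu, Hkt, Hk by lia. auto. }
  rewrite sumL_cons, sumL_nil, Rplus_0_r. rewrite prodR_S.
  rewrite (of_list_map_seq _ (S (S M)) (S M)) by lia.
  rewrite Hu', Hkt', Hk by lia. unfold extend at 3 4 5.
  destruct (Nat.leb_spec (S M) M); [lia|].
  rewrite Nat.sub_diag, Nat.sub_0_r, !C_n0, !pow_O, pow_1.
  rewrite Rmult_comm. f_equal; [ring|].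
  apply prodR_ext. intros n Hn. rewrite of_list_map_seq by lia.
  rewrite Hu, Hkt, Hk by lia. unfold extend. destruct (Nat.leb_spec n M); [|lia].
  rewrite Nat.sub_diag, C_nn, C_n0, !pow_O, pow_1. ring.
Qed.

Definition Rstar : rvec := fun n => if (n <=? 1)%nat then 1/2 else 0.
Definition lstar (M : nat) : list nat := 1%nat :: S M :: repeat 0%nat (M - 1).

Lemma kstar0 M : of_list (lstar M) 0%nat = 1%nat. Proof. reflexivity. Qed.
Lemma kstar1 M : of_list (lstar M) 1%nat = S M. Proof. reflexivity. Qed.
Lemma kstar2 M n : (2 <= n)%nat -> of_list (lstar M) n = 0%nat.
Proof. intros H. unfold of_list, lstar. destruct n as [|[|n]]; try lia. simpl. apply nth_repeat. Qed.
Lemma lstar_len M : (1 <= M)%nat -> length (lstar M) = S M.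
Proof. intros. unfold lstar. simpl. rewrite repeat_length. lia. Qed.

Lemma ampl_star M : (1 <= M)%nat ->
  ampl M Rstar (of_list (lstar M)) = (-(1/2)) ^ M * (1 - (1/2) ^ 2) * (1/2) ^ (S M).
Proof.
  intros HM. unfold ampl. cbv zeta. set (k := of_list (lstar M)).
  assert (Kt0 : ktil M k 0%nat = S M) by (unfold ktil; destruct (Nat.ltb_spec 0 M); [reflexivity|lia]).
  assert (Kt : forall n, (1 <= n)%nat -> ktil M k n = 0%nat)
    by (intros n Hn; unfold ktil; destruct (Nat.ltb_spec n M); [apply kstar2; lia|auto]).
  assert (U0 : uvec M k 0%nat = 1%nat) by (unfold uvec; rewrite Kt0; lia).
  assert (U : forall n, (1 <= n)%nat -> uvec M k n = 0%nat) by (intros; unfold uvec; rewrite Kt; auto).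
  rewrite boxes_single.
  2:{ intros i Hi. destruct i as [|i].
      - rewrite U0, Kt0. unfold k; rewrite kstar0. lia.
      - rewrite U, Kt by lia. lia. }
  rewrite sumL_cons, sumL_nil, Rplus_0_r.
  rewrite prodR_two by (try lia; intros n Hn; rewrite of_list_map_seq by lia;
     rewrite U, Kt by lia; unfold k; rewrite kstar2 by lia; rewrite Nat.sub_diag, C_n0, !pow_O; ring).
  rewrite !of_list_map_seq by lia. rewrite U0, Kt0, (U 1%nat), (Kt 1%nat) by lia.
  unfold k; rewrite kstar0, kstar1. unfold Rstar. simpl (0 <=? 1)%nat. simpl (1 <=? 1)%nat.
  rewrite Nat.sub_diag, Nat.sub_0_r, C_nn, C_n0, C_n0, !pow_O, pow_1.
  replace (S M - 1)%nat with M by lia. rewrite C_n0, Nat.sub_0_r. ring.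
Qed.

Lemma ampl_star_zero M l : (1 <= M)%nat -> length l = S M -> inL M (of_list l) = true ->
  sumk (of_list l) M = S (S M) -> l <> lstar M -> ampl M Rstar (of_list l) = 0.
Proof.
  intros HM Hl HL Hs Hne. set (k := of_list l) in *.
  destruct (classic (exists n, (2 <= n <= M)%nat /\ k n <> ktil M k n)) as [[n [Hn Hkn]]|Hno].
  - unfold ampl. cbv zeta. apply sumL_zero. intros bl Hbl. apply boxes_In in Hbl.
    destruct Hbl as [_ Hb]. apply (prodR_zero _ M n); [lia|]. cbv beta.
    specialize (Hb n ltac:(lia)). unfold of_list.
    set (b := nth n bl 0%nat) in *. set (kt := ktil M k n) in *.
    assert (Rstar n = 0) by (unfold Rstar; destruct (Nat.leb_spec n 1); [lia|auto]).
    rewrite H, Ropp_0. destruct (Nat.eq_dec (kt - b) 0) as [E|E].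
    + rewrite (pow_i (k n - b)) by lia. ring.
    + rewrite (pow_i (kt - b)) by lia. ring.
  - assert (Heq : forall n, (2 <= n <= M)%nat -> k n = ktil M k n)
      by (intros n Hn; apply NNPP; intro; apply Hno; exists n; auto).
    assert (Z : forall j n, (M - n = j)%nat -> (2 <= n <= M)%nat -> k n = 0%nat).
    { induction j; intros n Hj Hn.
      - rewrite Heq by lia. unfold ktil. destruct (Nat.ltb_spec n M); [lia|auto].
      - rewrite Heq by lia. unfold ktil. destruct (Nat.ltb_spec n M); [|lia].
        apply IHj; lia. }
    exfalso. apply Hne. apply inL_spec in HL. destruct HL as [H0 _].
    rewrite sumk_two in Hs by (try intros; try eapply Z; eauto; lia).
    apply (nth_ext _ _ 0%nat 0%nat). rewrite lstar_len; auto.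
    intros n Hn. change (nth n l 0%nat) with (k n). change (nth n (lstar M) 0%nat) with (of_list (lstar M) n).
    destruct n as [|[|n]].
    + rewrite kstar0; auto.
    + rewrite kstar1; lia.
    + rewrite kstar2 by lia. eapply Z; eauto; lia.
Qed.

Definition Qf (M : nat) (x : rvec) : R :=
  sumL (fun l => if inL M (of_list l) && (sumk (of_list l) M =? S (S M))%nat then ampl M x (of_list l) else 0)
       (boxes (fun _ => 0%nat) (fun _ => S (S (S M))) (S M)).
Definition Pf (M : nat) (x : rvec) : R := prodR (fun n => 1 - x n ^ 2) M.

Lemma Q_star M : (1 <= M)%nat -> Qf M Rstar = (-(1/2)) ^ M * (1 - (1/2) ^ 2) * (1/2) ^ (S M).
Proof.
  intros HM. unfold Qf. rewrite (sumL_single_in _ _ (lstar M)).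
  - assert (E : inL M (of_list (lstar M)) && (sumk (of_list (lstar M)) M =? S (S M))%nat = true).
    { apply andb_true_iff. split.
      - apply inL_spec. split; auto. intros n Hn. destruct (Nat.eq_dec n 1).
        + subst. right. rewrite kstar0. lia.
        + left. apply kstar2. lia.
      - apply Nat.eqb_eq. rewrite sumk_two by (try intros; try apply kstar2; lia).
        rewrite kstar0, kstar1. lia. }
    rewrite E. apply ampl_star; auto.
  - apply boxes_NoDup.
  - apply boxes_In. split; [apply lstar_len; auto|]. intros i Hi.
    change (nth i (lstar M) 0%nat) with (of_list (lstar M) i).
    destruct i as [|[|i]]; [rewrite kstar0| rewrite kstar1 | rewrite kstar2]; lia.
  - intros y Hy Hne. apply boxes_In in Hy. destruct Hy as [Hl _].
    destruct (inL M (of_list y)) eqn:E1; [|reflexivity].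
    destruct (Nat.eqb_spec (sumk (of_list y) M) (S (S M))); [|reflexivity].
    simpl. apply ampl_star_zero; auto.
Qed.

Lemma P_star M : (1 <= M)%nat -> Pf M Rstar = (1 - (1/2)^2) * (1 - (1/2)^2).
Proof.
  intros HM. unfold Pf. rewrite prodR_two; auto.
  intros n Hn. unfold Rstar. destruct (Nat.leb_spec n 1); [lia|]. ring.
Qed.


Lemma L_v0 M c R r A l : length l = S M ->
  hterm (S M) c (extend M R r) A (l ++ [0%nat]) = hterm M c R A l +
   (if inL M (of_list l) && (sumk (of_list l) M =? S (S M))%nat then
      (if excluded_middle_informative (A (INR (S (S M)) * c)) then ampl M R (of_list l) else 0) else 0).
Proof.
  intros Hl. unfold hterm. rewrite of_list_app0. set (k := of_list l).
  assert (H0 : k (S M) = 0%nat) by (unfold k, of_list; apply nth_overflow; lia).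
  rewrite inL_S0, ampl_ext0 by auto.
  change (sumk k (S M)) with (sumk k M + k (S M))%nat. rewrite H0, Nat.add_0_r.
  destruct (inL M k); simpl andb; [|lra].
  destruct (Nat.leb_spec (sumk k M) (S (S M))); destruct (Nat.leb_spec (sumk k M) (S M));
    destruct (Nat.eqb_spec (sumk k M) (S (S M))); try lia; try lra.
  rewrite e. lra.
Qed.

Lemma sumk_all1 N k : (forall n, (n <= N)%nat -> k n = 1%nat) -> sumk k N = S N.
Proof. induction N; intros H; simpl. apply H; lia. rewrite IHN by (intros; apply H; lia). rewrite H by lia. lia. Qed.

Lemma g_ones M c R r A :
  hterm (S M) c (extend M R r) A (repeat 1%nat (S M) ++ [1%nat]) =
  if excluded_middle_informative (A (INR (S (S M)) * c)) then r * Pf M R else 0.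
Proof.
  unfold hterm. set (k := of_list (repeat 1%nat (S M) ++ [1%nat])).
  assert (Hk : forall n, (n <= S M)%nat -> k n = 1%nat).
  { intros n Hn. unfold k. destruct (Nat.eq_dec n (S M)).
    - subst. rewrite <- (repeat_length 1%nat (S M)) at 2. apply of_list_app_last.
    - rewrite of_list_app_lt by (rewrite repeat_length; lia). unfold of_list. apply nth_repeat_lt; lia. }
  rewrite (inL_all1 (S M) k) by (try (apply Hk; lia); intros n Hn; rewrite Hk; auto).
  rewrite (sumk_all1 (S M) k Hk). rewrite Nat.leb_refl. simpl andb.
  rewrite ampl_ones by auto. reflexivity.
Qed.

Lemma seq_cons0 n : seq 0 (S n) = 0%nat :: seq 1 n.
Proof. reflexivity. Qed.

Lemma data_ident M c R r A : 0 < c ->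
  data (S M) (fun _ => c) (extend M R r) A = data M (fun _ => c) R A +
   (if excluded_middle_informative (A (INR (S (S M)) * c)) then r * Pf M R + Qf M R else 0).
Proof.
  intros Hc. rewrite !data_c by auto. rewrite (boxes_S _ _ (S M)), sumL_flat_map.
  set (B3 := boxes (fun _ => 0%nat) (fun _ => S (S (S M))) (S M)).
  set (ones := repeat 1%nat (S M)).
  set (g := hterm (S M) c (extend M R r) A (ones ++ [1%nat])).
  rewrite (sumL_ext _ (fun l => hterm (S M) c (extend M R r) A (l ++ [0%nat]) +
              (if list_eq_dec Nat.eq_dec l ones then g else 0))).
  2:{ intros l Hl. apply boxes_In in Hl. destruct Hl as [Hlen _].
      rewrite sumL_map. replace (S (S (S (S M))) - 0)%nat with (S (S (S (S M)))) by lia.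
      rewrite seq_cons0, sumL_cons. f_equal.
      destruct (list_eq_dec Nat.eq_dec l ones).
      - subst l. rewrite (sumL_single_in _ _ 1%nat); [reflexivity| | |].
        + apply seq_NoDup.
        + apply in_seq; lia.
        + intros y Hy Hne. apply in_seq in Hy. apply NNPP; intro Hz.
          destruct (hterm_top M c (extend M R r) A ones y Hlen ltac:(lia) Hz); lia.
      - apply sumL_zero. intros y Hy. apply in_seq in Hy. apply NNPP; intro Hz.
        destruct (hterm_top M c (extend M R r) A l y Hlen ltac:(lia) Hz); contradiction. }
  rewrite sumL_plus.
  rewrite (sumL_single_in (fun l => if list_eq_dec Nat.eq_dec l ones then g else 0) B3 ones).
  2:{ apply boxes_NoDup. }
  2:{ apply boxes_In. split; [apply repeat_length|]. intros i Hi. unfold ones. rewrite nth_repeat_lt; lia. }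
  2:{ intros y _ Hy. destruct (list_eq_dec Nat.eq_dec y ones); [contradiction|reflexivity]. }
  destruct (list_eq_dec Nat.eq_dec ones ones); [|contradiction].
  rewrite (sumL_ext _ (fun l => hterm M c R A l +
   (if inL M (of_list l) && (sumk (of_list l) M =? S (S M))%nat then
      (if excluded_middle_informative (A (INR (S (S M)) * c)) then ampl M R (of_list l) else 0) else 0))).
  2:{ intros l Hl. apply boxes_In in Hl. apply L_v0. tauto. }
  rewrite sumL_plus.
  rewrite (sumL_support (hterm M c R A) B3 (boxes (fun _ => 0%nat) (fun _ => S (S M)) (S M))).
  2,3: apply boxes_NoDup.
  2:{ intros l Hl. unfold hterm in Hl.
      destruct (inL M (of_list l) && (sumk (of_list l) M <=? S M))%nat eqn:E; [|exfalso; apply Hl; reflexivity].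
      apply andb_true_iff in E. destruct E as [_ E]. apply Nat.leb_le in E.
      unfold B3. rewrite !boxes_In. split; intros [Hlen _]; split; auto; intros i Hi;
        pose proof (sumk_ge M (of_list l) i ltac:(lia)); unfold of_list in *; lia. }
  assert (HE : sumL (fun l => if inL M (of_list l) && (sumk (of_list l) M =? S (S M))%nat then
      (if excluded_middle_informative (A (INR (S (S M)) * c)) then ampl M R (of_list l) else 0) else 0) B3
      = if excluded_middle_informative (A (INR (S (S M)) * c)) then Qf M R else 0).
  { unfold Qf. fold B3. destruct (excluded_middle_informative (A (INR (S (S M)) * c))).
    - apply sumL_ext; intros; destruct (_ && _); reflexivity.
    - apply sumL_zero; intros; destruct (_ && _); reflexivity. }
  rewrite HE. unfold g. rewrite g_ones.
  destruct (excluded_middle_informative (A (INR (S (S M)) * c))); lra.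
Qed.

Lemma same_data_iff M c R r : 0 < c ->
  (same_data M (fun _ => c) R (S M) (fun _ => c) (extend M R r) <-> r * Pf M R + Qf M R = 0).
Proof.
  intros Hc. unfold same_data. split.
  - intros H. specialize (H (fun t => t = INR (S (S M)) * c)). rewrite data_ident in H by auto.
    destruct (excluded_middle_informative _) as [_|n]; [lra|]. exfalso; apply n; reflexivity.
  - intros H A. rewrite data_ident by auto. destruct (excluded_middle_informative _); lra.
Qed.


Definition cont (d : nat) (f : rvec -> R) : Prop :=
  forall x eps, 0 < eps -> exists delta, 0 < delta /\
    forall y, (forall i, (i < d)%nat -> Rabs (y i - x i) < delta) -> Rabs (f y - f x) < eps.

Lemma cont_const d a : cont d (fun _ => a).
Proof. intros x eps He. exists 1. split; [lra|]. intros. rewrite Rminus_diag, Rabs_R0. auto. Qed.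

Lemma cont_coord d i : (i < d)%nat -> cont d (fun y => y i).
Proof. intros Hi x eps He. exists eps. split; auto. Qed.

Lemma cont_plus d f g : cont d f -> cont d g -> cont d (fun y => f y + g y).
Proof.
  intros Hf Hg x eps He. destruct (Hf x (eps/2)) as [d1 [Hd1 H1]]; [lra|].
  destruct (Hg x (eps/2)) as [d2 [Hd2 H2]]; [lra|].
  exists (Rmin d1 d2). split; [apply Rmin_glb_lt; auto|]. intros y Hy.
  assert (A1 := H1 y (fun i Hi => Rlt_le_trans _ _ _ (Hy i Hi) (Rmin_l _ _))).
  assert (A2 := H2 y (fun i Hi => Rlt_le_trans _ _ _ (Hy i Hi) (Rmin_r _ _))).
  replace (f y + g y - (f x + g x)) with ((f y - f x) + (g y - g x)) by ring.
  eapply Rle_lt_trans; [apply Rabs_triang|]. lra.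
Qed.

Lemma cont_opp d f : cont d f -> cont d (fun y => - f y).
Proof.
  intros Hf x eps He. destruct (Hf x eps He) as [d1 [Hd1 H1]]. exists d1. split; auto.
  intros y Hy. replace (- f y - - f x) with (- (f y - f x)) by ring. rewrite Rabs_Ropp. auto.
Qed.

Lemma cont_minus d f g : cont d f -> cont d g -> cont d (fun y => f y - g y).
Proof. intros Hf Hg. unfold Rminus. apply cont_plus; auto. apply cont_opp; auto. Qed.

Lemma cont_mult d f g : cont d f -> cont d g -> cont d (fun y => f y * g y).
Proof.
  intros Hf Hg x eps He.
  set (A := Rabs (f x) + 1). set (B := Rabs (g x) + 1).
  assert (HA : 0 < A) by (unfold A; pose proof (Rabs_pos (f x)); lra).
  assert (HB : 0 < B) by (unfold B; pose proof (Rabs_pos (g x)); lra).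
  destruct (Hf x (eps / (2 * B))) as [d1 [Hd1 H1]]. { apply Rdiv_lt_0_compat; lra. }
  destruct (Hg x (Rmin 1 (eps / (2 * A)))) as [d2 [Hd2 H2]].
  { apply Rmin_glb_lt; [lra|]. apply Rdiv_lt_0_compat; lra. }
  exists (Rmin d1 d2). split; [apply Rmin_glb_lt; auto|]. intros y Hy.
  assert (A1 := H1 y (fun i Hi => Rlt_le_trans _ _ _ (Hy i Hi) (Rmin_l _ _))).
  assert (A2 := H2 y (fun i Hi => Rlt_le_trans _ _ _ (Hy i Hi) (Rmin_r _ _))).
  assert (A2a : Rabs (g y - g x) < 1) by (eapply Rlt_le_trans; [apply A2|apply Rmin_l]).
  assert (A2b : Rabs (g y - g x) < eps / (2 * A)) by (eapply Rlt_le_trans; [apply A2|apply Rmin_r]).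
  assert (Gy : Rabs (g y) < B).
  { unfold B. replace (g y) with (g x + (g y - g x)) by ring.
    eapply Rle_lt_trans; [apply Rabs_triang|]. lra. }
  replace (f y * g y - f x * g x) with ((f y - f x) * g y + f x * (g y - g x)) by ring.
  eapply Rle_lt_trans; [apply Rabs_triang|]. rewrite !Rabs_mult.
  assert (T1 : Rabs (f y - f x) * Rabs (g y) <= eps / (2 * B) * B).
  { apply Rmult_le_compat; try apply Rabs_pos; lra. }
  assert (T2 : Rabs (f x) * Rabs (g y - g x) <= Rabs (f x) * (eps / (2 * A))).
  { apply Rmult_le_compat_l; [apply Rabs_pos|lra]. }
  assert (T3 : Rabs (f x) * (eps / (2 * A)) < A * (eps / (2 * A))).
  { apply Rmult_lt_compat_r; [apply Rdiv_lt_0_compat; lra|]. unfold A; lra. }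
  replace (eps / (2 * B) * B) with (eps / 2) in T1 by (field; lra).
  replace (A * (eps / (2 * A))) with (eps / 2) in T3 by (field; lra).
  lra.
Qed.

Lemma cont_pow d f n : cont d f -> cont d (fun y => f y ^ n).
Proof. intros Hf. induction n. change (cont d (fun _ => 1)). apply cont_const. change (cont d (fun y => f y * f y ^ n)). apply cont_mult; auto. Qed.

Lemma cont_sumL {A} d (g : A -> rvec -> R) l : (forall a, In a l -> cont d (g a)) ->
  cont d (fun y => sumL (fun a => g a y) l).
Proof.
  induction l; intros H. change (cont d (fun _ => 0)). apply cont_const.
  change (cont d (fun y => g a y + sumL (fun a => g a y) l)). apply cont_plus.
  apply H; left; auto. apply IHl; intros; apply H; right; auto.
Qed.

Lemma cont_prodR d (f : nat -> rvec -> R) N : (forall n, (n <= N)%nat -> cont d (f n)) ->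
  cont d (fun y => prodR (fun n => f n y) N).
Proof.
  induction N; intros H. apply H; lia.
  change (cont d (fun y => prodR (fun n => f n y) N * f (S N) y)). apply cont_mult.
  apply IHN; intros; apply H; lia. apply H; lia.
Qed.

Lemma cont_ampl M k : cont (S M) (fun y => ampl M y k).
Proof.
  unfold ampl. cbv zeta. apply cont_sumL. intros bl _. apply cont_prodR. intros n Hn.
  repeat apply cont_mult; try apply cont_const; repeat apply cont_pow;
    try (apply cont_opp; apply cont_coord; lia).
  apply cont_coord; lia. apply cont_minus. apply cont_const. apply cont_pow. apply cont_coord; lia.
Qed.

Lemma cont_Q M : cont (S M) (Qf M).
Proof.
  unfold Qf. apply cont_sumL. intros l _. destruct (_ && _). apply cont_ampl. apply cont_const.
Qed.

Lemma cont_P M : cont (S M) (Pf M).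
Proof.
  unfold Pf. apply (cont_prodR (S M) (fun n y => 1 - y n ^ 2)). intros n Hn.
  apply cont_minus. apply cont_const. apply cont_pow. apply cont_coord; lia.
Qed.


Definition Sset (M : nat) (c : R) : rvec -> Prop :=
    (fun Rc : rvec =>
       (forall i, (i <= M)%nat -> -1 < Rc i < 1) /\
       exists r : R, -1 < r < 1 /\ r <> 0 /\
         same_data M (fun _ => c) Rc (S M) (fun _ => c) (extend M Rc r)).

Lemma prodR_pos f N : (forall n, (n <= N)%nat -> 0 < f n) -> 0 < prodR f N.
Proof. induction N; intros H; simpl. apply H; lia. apply Rmult_lt_0_compat. apply IHN; intros; apply H; lia. apply H; lia. Qed.

Lemma P_pos M x : (forall i, (i <= M)%nat -> -1 < x i < 1) -> 0 < Pf M x.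
Proof. intros H. unfold Pf. apply prodR_pos. intros n Hn. specialize (H n Hn). simpl. nra. Qed.

Lemma S_iff M c x : 0 < c -> (Sset M c x <->
  ((forall i, (i <= M)%nat -> -1 < x i < 1) /\ Qf M x <> 0 /\ Rabs (Qf M x) < Pf M x)).
Proof.
  intros Hc. unfold Sset. split.
  - intros [Hcube [r [Hr [Hr0 Hs]]]]. apply same_data_iff in Hs; auto.
    pose proof (P_pos M x Hcube). split; auto.
    assert (Qf M x = - r * Pf M x) by lra. rewrite H0. split.
    + intro Z. apply Rmult_integral in Z. destruct Z; [apply Hr0; lra|lra].
    + rewrite Rabs_mult, (Rabs_right (Pf M x)) by lra. rewrite Rabs_Ropp.
      assert (Rabs r < 1) by (apply Rabs_def1; lra).
      pose proof (Rabs_pos r). nra.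
  - intros [Hcube [HQ HQP]]. pose proof (P_pos M x Hcube). split; auto.
    exists (- Qf M x / Pf M x). apply Rabs_def2 in HQP. destruct HQP as [H1 H2].
    split; [|split].
    + split; [apply Rmult_lt_reg_r with (Pf M x); auto; unfold Rdiv; rewrite Rmult_assoc, Rinv_l by lra; lra|].
      apply Rmult_lt_reg_r with (Pf M x); auto; unfold Rdiv; rewrite Rmult_assoc, Rinv_l by lra; lra.
    + intro Z. apply HQ. unfold Rdiv in Z. apply Rmult_integral in Z. destruct Z as [Z|Z]; [lra|].
      exfalso. apply (Rinv_neq_0_compat (Pf M x)); lra.
    + apply same_data_iff; auto. field. lra.
Qed.

Lemma finite_min (g : nat -> R) N : (forall i, (i <= N)%nat -> 0 < g i) ->
  exists m, 0 < m /\ forall i, (i <= N)%nat -> m <= g i.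
Proof.
  induction N; intros H.
  - exists (g 0%nat). split; [apply H; lia|]. intros i Hi. replace i with 0%nat by lia. lra.
  - destruct IHN as [m [Hm Hm']]; [intros; apply H; lia|].
    exists (Rmin m (g (S N))). split; [apply Rmin_glb_lt; auto; apply H; lia|].
    intros i Hi. destruct (Nat.eq_dec i (S N)); [subst; apply Rmin_r|].
    eapply Rle_trans; [apply Rmin_l|]. apply Hm'; lia.
Qed.

Lemma open_S M c : 0 < c -> Defs.open_set (S M) (Sset M c).
Proof.
  intros Hc x Hx. apply S_iff in Hx; auto. destruct Hx as [Hcube [HQ HQP]].
  set (e := Rmin (Rabs (Qf M x)) (Pf M x - Rabs (Qf M x)) / 2).
  assert (He : 0 < e). { unfold e. apply Rdiv_lt_0_compat; [|lra]. apply Rmin_glb_lt; [apply Rabs_pos_lt; auto|lra]. }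
  assert (He1 : e <= Rabs (Qf M x) / 2) by (unfold e; pose proof (Rmin_l (Rabs (Qf M x)) (Pf M x - Rabs (Qf M x))); lra).
  assert (He2 : e <= (Pf M x - Rabs (Qf M x)) / 2) by (unfold e; pose proof (Rmin_r (Rabs (Qf M x)) (Pf M x - Rabs (Qf M x))); lra).
  destruct (cont_Q M x e He) as [d1 [Hd1 H1]].
  destruct (cont_P M x e He) as [d2 [Hd2 H2]].
  destruct (finite_min (fun i => 1 - Rabs (x i)) M) as [m [Hm Hm']].
  { intros i Hi. specialize (Hcube i Hi). assert (Rabs (x i) < 1) by (apply Rabs_def1; lra). lra. }
  exists (Rmin d1 (Rmin d2 m)). split. { apply Rmin_glb_lt; auto. apply Rmin_glb_lt; auto. }
  intros y Hy. apply S_iff; auto.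
  assert (Y1 : forall i, (i < S M)%nat -> Rabs (y i - x i) < d1)
    by (intros i Hi; eapply Rlt_le_trans; [apply Hy; auto| apply Rmin_l]).
  assert (Y2 : forall i, (i < S M)%nat -> Rabs (y i - x i) < d2)
    by (intros i Hi; eapply Rlt_le_trans; [apply Hy; auto| eapply Rle_trans; [apply Rmin_r|apply Rmin_l]]).
  assert (Y3 : forall i, (i < S M)%nat -> Rabs (y i - x i) < m)
    by (intros i Hi; eapply Rlt_le_trans; [apply Hy; auto| eapply Rle_trans; [apply Rmin_r|apply Rmin_r]]).
  specialize (H1 y Y1). specialize (H2 y Y2).
  split; [|split].
  - intros i Hi. specialize (Y3 i ltac:(lia)). specialize (Hm' i Hi).
    apply Rabs_def2 in Y3. assert (Rabs (x i) >= x i /\ Rabs (x i) >= - x i) by (split; [apply Rle_ge, RRle_abs| rewrite <- Rabs_Ropp; apply Rle_ge, RRle_abs]).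
    lra.
  - intro Z. rewrite Z in H1. rewrite Rminus_0_l, Rabs_Ropp in H1. lra.
  - apply Rabs_def2 in H2.
    assert (Rabs (Qf M y) <= Rabs (Qf M x) + Rabs (Qf M y - Qf M x)).
    { replace (Qf M y) with (Qf M x + (Qf M y - Qf M x)) at 1 by ring. apply Rabs_triang. }
    lra.
Qed.

Lemma pow_le1 x n : 0 <= x <= 1 -> 0 <= x ^ n <= 1.
Proof. intros H. induction n; simpl; nra. Qed.

Lemma Rstar_in M c : (1 <= M)%nat -> 0 < c -> Sset M c Rstar.
Proof.
  intros HM Hc. apply S_iff; auto. rewrite Q_star, P_star by auto. split; [|split].
  - intros i _. unfold Rstar. destruct (i <=? 1)%nat; lra.
  - repeat apply Rmult_integral_contrapositive_currified; try apply pow_nonzero; lra.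
  - rewrite !Rabs_mult, <- !RPow_abs. rewrite Rabs_Ropp, Rabs_right by lra.
    rewrite (Rabs_right (1 - (1/2)^2)) by (simpl; lra).
    pose proof (pow_le1 (1/2) M ltac:(lra)). simpl ((1/2) ^ (S M)). simpl ((1/2)^2). nra.
Qed.


Fixpoint sumN (f : nat -> R) (n : nat) : R := match n with O => 0 | S m => sumN f m + f m end.
Fixpoint sumNat (f : nat -> nat) (n : nat) : nat := match n with O => 0%nat | S m => (sumNat f m + f m)%nat end.

Lemma sumN_plus f g n : sumN (fun j => f j + g j) n = sumN f n + sumN g n.
Proof. induction n; simpl; lra. Qed.
Lemma sumN_le f g n : (forall j, (j < n)%nat -> f j <= g j) -> sumN f n <= sumN g n.
Proof. induction n; intros H; simpl. lra. pose proof (H n ltac:(lia)). pose proof (IHn ltac:(intros; apply H; lia)). lra. Qed.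
Lemma sumN_nonneg f n : (forall j, (j < n)%nat -> 0 <= f j) -> 0 <= sumN f n.
Proof. induction n; intros H; simpl. lra. pose proof (H n ltac:(lia)). pose proof (IHn ltac:(intros; apply H; lia)). lra. Qed.
Lemma sumN_term f n j : (forall k, (k < n)%nat -> 0 <= f k) -> (j < n)%nat -> f j <= sumN f n.
Proof. induction n; intros H Hj; simpl. lia. destruct (Nat.eq_dec j n).
  - subst. pose proof (sumN_nonneg f n ltac:(intros; apply H; lia)). lra.
  - pose proof (IHn ltac:(intros; apply H; lia) ltac:(lia)). pose proof (H n ltac:(lia)). lra. Qed.
Lemma sumN_ext f g n : (forall j, (j < n)%nat -> f j = g j) -> sumN f n = sumN g n.
Proof. induction n; intros H; simpl; auto. rewrite IHn, H by (try intros; try apply H; lia). auto. Qed.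

Lemma sumNat_le f g n : (forall k, (k < n)%nat -> (f k <= g k)%nat) -> (sumNat f n <= sumNat g n)%nat.
Proof. induction n; intros H; simpl. lia. pose proof (H n ltac:(lia)). pose proof (IHn ltac:(intros; apply H; lia)). lia. Qed.
Lemma sumNat_lt f g n : (forall k, (k < n)%nat -> (f k <= g k)%nat) -> (exists k, (k < n)%nat /\ (f k < g k)%nat) ->
  (sumNat f n < sumNat g n)%nat.
Proof. induction n; intros H [k [Hk Hfg]]; simpl. lia.
  pose proof (sumNat_le f g n ltac:(intros; apply H; lia)). pose proof (H n ltac:(lia)).
  destruct (Nat.eq_dec k n). subst; lia.
  pose proof (IHn ltac:(intros; apply H; lia) ltac:(exists k; split; auto; lia)). lia. Qed.

Lemma vol_nonneg d a b : 0 <= vol d a b.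
Proof. induction d; simpl. lra. apply Rmult_le_pos; auto. apply Rmax_l. Qed.
Lemma vol_ext d a b a' b' : (forall i, (i < d)%nat -> a i = a' i /\ b i = b' i) -> vol d a b = vol d a' b'.
Proof. induction d; intros H; simpl; auto. rewrite IHd by (intros; apply H; lia). destruct (H d ltac:(lia)) as [-> ->]. auto. Qed.
Lemma vol_mono d a b a' b' : (forall i, (i < d)%nat -> a' i <= a i /\ b i <= b' i) -> vol d a b <= vol d a' b'.
Proof. induction d; intros H; simpl. lra. apply Rmult_le_compat; try apply vol_nonneg; try apply Rmax_l.
  apply IHd; intros; apply H; lia. destruct (H d ltac:(lia)). unfold Rmax; repeat destruct Rle_dec; lra. Qed.
Lemma vol_zero d a b i : (i < d)%nat -> b i <= a i -> vol d a b = 0.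
Proof. induction d; intros Hi H; simpl. lia. destruct (Nat.eq_dec i d).
  - subst. rewrite Rmax_left by lra. ring.
  - rewrite IHd by (auto; lia). ring. Qed.
Lemma vol_pos d a b : (forall i, (i < d)%nat -> a i < b i) -> 0 < vol d a b.
Proof. induction d; intros H; simpl. lra. apply Rmult_lt_0_compat. apply IHd; intros; apply H; lia.
  pose proof (H d ltac:(lia)). rewrite Rmax_right by lra. lra. Qed.
Lemma vol_split d i a b a1 b1 a2 b2 : (i < d)%nat ->
  (forall j, j <> i -> a1 j = a j /\ b1 j = b j /\ a2 j = a j /\ b2 j = b j) ->
  Rmax 0 (b1 i - a1 i) + Rmax 0 (b2 i - a2 i) = Rmax 0 (b i - a i) ->
  vol d a1 b1 + vol d a2 b2 = vol d a b.
Proof.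
  induction d; intros Hi H Hs; simpl. lia. destruct (Nat.eq_dec i d).
  - subst. rewrite (vol_ext d a1 b1 a b), (vol_ext d a2 b2 a b) by (intros j Hj; destruct (H j ltac:(lia)) as [? [? [? ?]]]; auto).
    rewrite <- Hs. ring.
  - destruct (H d ltac:(lia)) as [-> [-> [-> ->]]]. rewrite <- (IHd ltac:(lia) H Hs). ring.
Qed.

Lemma enlarge d a b eps : 0 < eps -> exists eta, 0 < eta /\ forall e, 0 <= e <= eta ->
  vol d (fun i => a i - e) (fun i => b i + e) <= vol d a b + eps.
Proof.
  revert eps. induction d; intros eps He.
  - exists 1. split; [lra|]. intros. simpl. lra.
  - set (V := vol d a b). set (F := Rmax 0 (b d - a d)).
    assert (HV : 0 <= V) by apply vol_nonneg. assert (HF : 0 <= F) by apply Rmax_l.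
    set (e1 := eps / (2 * (F + 1))).
    assert (He1 : 0 < e1) by (unfold e1; apply Rdiv_lt_0_compat; lra).
    destruct (IHd e1 He1) as [eta1 [Heta1 H1]].
    set (eta := Rmin eta1 (eps / (4 * (V + e1 + 1)))).
    assert (Heta : 0 < eta) by (apply Rmin_glb_lt; auto; apply Rdiv_lt_0_compat; lra).
    exists eta. split; auto. intros e He0. unfold eta in He0. simpl.
    assert (Hee1 : e <= eta1) by (pose proof (Rmin_l eta1 (eps / (4 * (V + e1 + 1)))); lra).
    assert (Hee2 : e <= eps / (4 * (V + e1 + 1))) by (pose proof (Rmin_r eta1 (eps / (4 * (V + e1 + 1)))); lra).
    specialize (H1 e ltac:(lra)). fold V in H1.
    assert (HF' : Rmax 0 (b d + e - (a d - e)) <= F + 2 * e) by (unfold F, Rmax; repeat destruct Rle_dec; lra).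
    assert (HV' : 0 <= vol d (fun i => a i - e) (fun i => b i + e)) by apply vol_nonneg.
    assert (P1 : vol d (fun i => a i - e) (fun i => b i + e) * Rmax 0 (b d + e - (a d - e)) <= (V + e1) * (F + 2 * e)).
    { apply Rmult_le_compat; auto; apply Rmax_l. }
    assert (P2 : e1 * F <= eps / 2).
    { unfold e1. apply Rmult_le_reg_r with (2 * (F + 1)); [lra|].
      replace (eps / (2 * (F + 1)) * F * (2 * (F + 1))) with (eps * F) by (field; lra).
      replace (eps / 2 * (2 * (F + 1))) with (eps * F + eps) by (field). lra. }
    assert (P3 : 2 * e * (V + e1) <= eps / 2).
    { assert (2 * e * (V + e1) <= 2 * (eps / (4 * (V + e1 + 1))) * (V + e1)) by (apply Rmult_le_compat_r; lra).
      assert (2 * (eps / (4 * (V + e1 + 1))) * (V + e1) <= eps / 2).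
      { apply Rmult_le_reg_r with (4 * (V + e1 + 1)); [lra|].
        replace (2 * (eps / (4 * (V + e1 + 1))) * (V + e1) * (4 * (V + e1 + 1))) with (2 * eps * (V + e1)) by (field; lra).
        replace (eps / 2 * (4 * (V + e1 + 1))) with (2 * eps * (V + e1) + 2 * eps) by field. lra. }
      lra. }
    replace ((V + e1) * (F + 2 * e)) with (V * F + e1 * F + 2 * e * (V + e1)) in P1 by ring.
    change (vol d a b) with V. change (Rmax 0 (b d - a d)) with F. lra.
Qed.

Definition upd (f : rvec) (i : nat) (v : R) : rvec := fun j => if Nat.eq_dec j i then v else f j.
Definition ind (a b p : R) : nat := if Rlt_dec a p then if Rlt_dec p b then 1%nat else 0%nat else 0%nat.
Definition inter d (lo hi a b : rvec) : R := vol d (fun i => Rmax (a i) (lo i)) (fun i => Rmin (b i) (hi i)).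
Definition cnt d n (lo hi : nat -> rvec) (a b : rvec) : nat :=
  sumNat (fun j => sumNat (fun i => ind (a i) (b i) (lo j i) + ind (a i) (b i) (hi j i))%nat d) n.

Lemma ind_mono a b a' b' p : a <= a' -> b' <= b -> (ind a' b' p <= ind a b p)%nat.
Proof. intros. unfold ind. repeat destruct Rlt_dec; try lia; lra. Qed.
Lemma ind_one a b p : a < p < b -> ind a b p = 1%nat.
Proof. intros. unfold ind. repeat destruct Rlt_dec; try lia; lra. Qed.
Lemma ind_r a p : ind a p p = 0%nat.
Proof. unfold ind. repeat destruct Rlt_dec; try lia; lra. Qed.
Lemma ind_l b p : ind p b p = 0%nat.
Proof. unfold ind. repeat destruct Rlt_dec; try lia; lra. Qed.

Lemma split_fact a b p lo hi : a <= p <= b ->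
  Rmax 0 (Rmin p hi - Rmax a lo) + Rmax 0 (Rmin b hi - Rmax p lo) = Rmax 0 (Rmin b hi - Rmax a lo).
Proof. intros. unfold Rmax, Rmin. repeat destruct Rle_dec; lra. Qed.

Lemma nocut d n lo hi a b :
  (forall j i, (j < n)%nat -> (i < d)%nat -> ~ (a i < lo j i < b i) /\ ~ (a i < hi j i < b i)) ->
  (forall x, in_box d a b x -> exists j, (j < n)%nat /\ in_box d (lo j) (hi j) x) ->
  vol d a b <= sumN (fun j => inter d (lo j) (hi j) a b) n.
Proof.
  intros Hno Hcov.
  assert (Hnn : forall j, (j < n)%nat -> 0 <= inter d (lo j) (hi j) a b) by (intros; apply vol_nonneg).
  destruct (classic (exists i, (i < d)%nat /\ b i <= a i)) as [[i [Hi Hba]]|Hall].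
  - rewrite (vol_zero d a b i) by auto. apply sumN_nonneg; auto.
  - assert (Hab : forall i, (i < d)%nat -> a i < b i) by (intros i Hi; apply Rnot_le_lt; intro; apply Hall; exists i; auto).
    destruct (Hcov (fun i => (a i + b i) / 2)) as [j [Hj Hin]].
    { intros i Hi. specialize (Hab i Hi). lra. }
    eapply Rle_trans; [|apply (sumN_term _ n j); auto].
    right. unfold inter. apply vol_ext. intros i Hi. specialize (Hin i Hi). specialize (Hab i Hi).
    destruct (Hno j i Hj Hi) as [N1 N2]. cbv beta in Hin.
    split; [rewrite Rmax_left|rewrite Rmin_left]; auto.
    + apply Rnot_lt_le. intro. apply N1. lra.
    + apply Rnot_lt_le. intro. apply N2. lra.
Qed.

Lemma sumNat_term f n j : (j < n)%nat -> (f j <= sumNat f n)%nat.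
Proof. induction n; intros Hj; simpl. lia. destruct (Nat.eq_dec j n). subst; lia. pose proof (IHn ltac:(lia)); lia. Qed.

Lemma cnt_lt d n lo hi a b a' b' : (forall i, (i < d)%nat -> a i <= a' i /\ b' i <= b i) ->
  (exists j i, (j < n)%nat /\ (i < d)%nat /\
     (ind (a' i) (b' i) (lo j i) + ind (a' i) (b' i) (hi j i) < ind (a i) (b i) (lo j i) + ind (a i) (b i) (hi j i))%nat) ->
  (cnt d n lo hi a' b' < cnt d n lo hi a b)%nat.
Proof.
  intros Hab [j0 [i0 [Hj0 [Hi0 Hlt]]]]. unfold cnt.
  assert (Hle : forall j i, (i < d)%nat -> (ind (a' i) (b' i) (lo j i) + ind (a' i) (b' i) (hi j i) <= ind (a i) (b i) (lo j i) + ind (a i) (b i) (hi j i))%nat).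
  { intros j i Hi. destruct (Hab i Hi) as [Y1 Y2].
    assert (X1 := ind_mono (a i) (b i) (a' i) (b' i) (lo j i) Y1 Y2).
    assert (X2 := ind_mono (a i) (b i) (a' i) (b' i) (hi j i) Y1 Y2). lia. }
  apply sumNat_lt.
  - intros k Hk. apply sumNat_le. intros; apply Hle; auto.
  - exists j0. split; auto. apply sumNat_lt. intros; apply Hle; auto. exists i0; auto.
Qed.

Lemma fin_cover d n lo hi : forall m a b, (cnt d n lo hi a b <= m)%nat ->
  (forall x, in_box d a b x -> exists j, (j < n)%nat /\ in_box d (lo j) (hi j) x) ->
  vol d a b <= sumN (fun j => inter d (lo j) (hi j) a b) n.
Proof.
  induction m; intros a b Hm Hcov;
  (destruct (classic (exists j i, (j < n)%nat /\ (i < d)%nat /\ ((a i < lo j i < b i) \/ (a i < hi j i < b i))))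
    as [[j0 [i0 [Hj0 [Hi0 Hcut]]]]|Hno];
    [|apply nocut; auto; intros j i Hj Hi; split; intro; apply Hno; exists j, i; auto]).
  - exfalso.
    pose proof (sumNat_term (fun j => sumNat (fun i => ind (a i) (b i) (lo j i) + ind (a i) (b i) (hi j i))%nat d) n j0 Hj0).
    pose proof (sumNat_term (fun i => ind (a i) (b i) (lo j0 i) + ind (a i) (b i) (hi j0 i))%nat d i0 Hi0).
    cbv beta in *. unfold cnt in Hm.
    destruct Hcut as [Hc|Hc]; [rewrite (ind_one _ _ (lo j0 i0) Hc) in H0|rewrite (ind_one _ _ (hi j0 i0) Hc) in H0]; lia.
  - assert (Hp : exists p, a i0 < p < b i0 /\ (p = lo j0 i0 \/ p = hi j0 i0)).
    { destruct Hcut; [exists (lo j0 i0)|exists (hi j0 i0)]; auto. }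
    destruct Hp as [p [Hp Hpe]].
    assert (C1 : (cnt d n lo hi a (upd b i0 p) < cnt d n lo hi a b)%nat).
    { apply cnt_lt.
      - intros i Hi. unfold upd. destruct (Nat.eq_dec i i0); [subst|]; split; lra.
      - exists j0, i0. split; auto. split; auto. unfold upd. destruct (Nat.eq_dec i0 i0); [|contradiction].
        destruct Hpe as [<-|<-]; rewrite ind_r, (ind_one (a i0) (b i0) p Hp);
          [pose proof (ind_mono (a i0) (b i0) (a i0) p (hi j0 i0))| pose proof (ind_mono (a i0) (b i0) (a i0) p (lo j0 i0))];
          specialize (H ltac:(lra) ltac:(lra)); lia. }
    assert (C2 : (cnt d n lo hi (upd a i0 p) b < cnt d n lo hi a b)%nat).
    { apply cnt_lt.
      - intros i Hi. unfold upd. destruct (Nat.eq_dec i i0); [subst|]; split; lra.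
      - exists j0, i0. split; auto. split; auto. unfold upd. destruct (Nat.eq_dec i0 i0); [|contradiction].
        destruct Hpe as [<-|<-]; rewrite ind_l, (ind_one (a i0) (b i0) p Hp);
          [pose proof (ind_mono (a i0) (b i0) p (b i0) (hi j0 i0))| pose proof (ind_mono (a i0) (b i0) p (b i0) (lo j0 i0))];
          specialize (H ltac:(lra) ltac:(lra)); lia. }
    assert (I1 := IHm a (upd b i0 p) ltac:(lia)).
    assert (I2 := IHm (upd a i0 p) b ltac:(lia)).
    assert (Sub1 : forall x, in_box d a (upd b i0 p) x -> in_box d a b x).
    { intros x Hx i Hi. specialize (Hx i Hi). unfold upd in Hx. destruct (Nat.eq_dec i i0); [subst|]; lra. }
    assert (Sub2 : forall x, in_box d (upd a i0 p) b x -> in_box d a b x).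
    { intros x Hx i Hi. specialize (Hx i Hi). unfold upd in Hx. destruct (Nat.eq_dec i i0); [subst|]; lra. }
    specialize (I1 (fun x H => Hcov x (Sub1 x H))). specialize (I2 (fun x H => Hcov x (Sub2 x H))).
    assert (Ev : vol d a (upd b i0 p) + vol d (upd a i0 p) b = vol d a b).
    { apply (vol_split d i0); auto.
      - intros j Hj. unfold upd. destruct (Nat.eq_dec j i0); [contradiction|]. auto.
      - unfold upd. destruct (Nat.eq_dec i0 i0); [|contradiction]. unfold Rmax. repeat destruct Rle_dec; lra. }
    assert (Es : sumN (fun j => inter d (lo j) (hi j) a (upd b i0 p)) n + sumN (fun j => inter d (lo j) (hi j) (upd a i0 p) b) n
                 = sumN (fun j => inter d (lo j) (hi j) a b) n).
    { rewrite <- sumN_plus. apply sumN_ext. intros j Hj. unfold inter. apply (vol_split d i0); auto.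
      - intros k Hk. unfold upd. destruct (Nat.eq_dec k i0); [contradiction|]. auto.
      - unfold upd. destruct (Nat.eq_dec i0 i0); [|contradiction]. apply split_fact. lra. }
    lra.
Qed.


Definition in_obox (d : nat) (a b x : rvec) : Prop := forall i, (i < d)%nat -> a i < x i < b i.

Section Compact.
Variable d : nat.
Variables lo hi : nat -> rvec.

Definition NF (p : rvec * rvec) : Prop :=
  forall n, exists x, in_box d (fst p) (snd p) x /\ forall j, (j < n)%nat -> ~ in_obox d (lo j) (hi j) x.

Definition halfL (i : nat) (p : rvec * rvec) : rvec * rvec :=
  (fst p, upd (snd p) i ((fst p i + snd p i) / 2)).
Definition halfR (i : nat) (p : rvec * rvec) : rvec * rvec :=
  (upd (fst p) i ((fst p i + snd p i) / 2), snd p).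

Lemma NF_half i p : NF p -> NF (halfL i p) \/ NF (halfR i p).
Proof.
  intros H. apply NNPP. intro Hn. apply not_or_and in Hn. destruct Hn as [H1 H2].
  unfold NF in H1, H2. apply not_all_ex_not in H1. apply not_all_ex_not in H2.
  destruct H1 as [n1 H1]. destruct H2 as [n2 H2].
  destruct (H (Nat.max n1 n2)) as [x [Hx Hj]].
  destruct (Rle_dec (x i) ((fst p i + snd p i) / 2)).
  - apply H1. exists x. split.
    + intros k Hk. specialize (Hx k Hk). unfold halfL, upd; simpl. destruct (Nat.eq_dec k i); [subst|]; lra.
    + intros j Hj1. apply Hj. lia.
  - apply H2. exists x. split.
    + intros k Hk. specialize (Hx k Hk). unfold halfR, upd; simpl. destruct (Nat.eq_dec k i); [subst|]; lra.
    + intros j Hj1. apply Hj. lia.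
Qed.

Definition choose (i : nat) (p : rvec * rvec) : rvec * rvec :=
  if excluded_middle_informative (NF (halfL i p)) then halfL i p else halfR i p.

Lemma choose_NF i p : NF p -> NF (choose i p).
Proof. intros H. unfold choose. destruct (excluded_middle_informative _); auto.
  destruct (NF_half i p H); tauto. Qed.

Definition good (p : rvec * rvec) := forall j, fst p j <= snd p j.

Lemma choose_props i p : good p ->
  good (choose i p) /\ (forall j, fst p j <= fst (choose i p) j /\ snd (choose i p) j <= snd p j) /\
  snd (choose i p) i - fst (choose i p) i = (snd p i - fst p i) / 2 /\
  (forall j, j <> i -> fst (choose i p) j = fst p j /\ snd (choose i p) j = snd p j).
Proof.
  intros G. unfold choose. destruct (excluded_middle_informative _); unfold halfL, halfR, good, upd; simpl;
    (split; [|split; [|split]]);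
    try (intros j; specialize (G j); destruct (Nat.eq_dec j i); [subst|]; try split; lra);
    try (destruct (Nat.eq_dec i i); [|contradiction]; specialize (G i); lra);
    intros j Hj; (destruct (Nat.eq_dec j i); [contradiction|]; split; auto).
Qed.

Fixpoint hall (k : nat) (p : rvec * rvec) : rvec * rvec :=
  match k with O => p | S k' => choose k' (hall k' p) end.

Lemma hall_props k p : good p ->
  good (hall k p) /\ (forall j, fst p j <= fst (hall k p) j /\ snd (hall k p) j <= snd p j) /\
  (forall i, (i < k)%nat -> snd (hall k p) i - fst (hall k p) i = (snd p i - fst p i) / 2) /\
  (forall j, (k <= j)%nat -> fst (hall k p) j = fst p j /\ snd (hall k p) j = snd p j) /\
  (NF p -> NF (hall k p)).
Proof.
  intros G. induction k; simpl.
  - split; auto. split; [intros; lra|]. split; [intros; lia|]. split; auto.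
  - destruct IHk as [G1 [M1 [W1 [U1 N1]]]].
    destruct (choose_props k (hall k p) G1) as [G2 [M2 [W2 U2]]].
    split; auto. split; [|split; [|split]].
    + intros j. specialize (M1 j). specialize (M2 j). lra.
    + intros i Hi. destruct (Nat.eq_dec i k).
      * subst. rewrite W2. destruct (U1 k ltac:(lia)) as [-> ->]. auto.
      * destruct (U2 i n) as [-> ->]. apply W1. lia.
    + intros j Hj. destruct (U2 j ltac:(lia)) as [-> ->]. apply U1. lia.
    + intros H. apply choose_NF. auto.
Qed.

Definition step (p : rvec * rvec) := hall d p.
Fixpoint seqK (t : nat) (p : rvec * rvec) : rvec * rvec :=
  match t with O => p | S t' => step (seqK t' p) end.

Lemma seqK_props p : good p -> forall t,
  good (seqK t p) /\ (forall j, fst (seqK t p) j <= fst (seqK (S t) p) j /\ snd (seqK (S t) p) j <= snd (seqK t p) j) /\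
  (forall i, (i < d)%nat -> snd (seqK t p) i - fst (seqK t p) i = (snd p i - fst p i) / 2 ^ t) /\
  (NF p -> NF (seqK t p)).
Proof.
  intros G. induction t.
  - simpl. destruct (hall_props d p G) as [G1 [M1 _]]. split; auto. split; auto.
    split; auto. intros. field.
  - destruct IHt as [G1 [_ [W1 N1]]].
    destruct (hall_props d (seqK t p) G1) as [G2 [M2 [W2 [_ N2]]]].
    destruct (hall_props d (step (seqK t p)) G2) as [G3 [M3 _]].
    split; [exact G2|]. split; [exact M3|]. split.
    + intros i Hi. simpl. unfold step at 1. rewrite W2 by auto. rewrite W1 by auto. simpl. field. apply pow_nonzero; lra.
    + intros H; apply N2; auto.
Qed.
End Compact.

Lemma finite_min' (g : nat -> R) d : (forall i, (i < d)%nat -> 0 < g i) ->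
  exists m, 0 < m /\ forall i, (i < d)%nat -> m <= g i.
Proof.
  induction d; intros H.
  - exists 1. split; [lra|]. intros; lia.
  - destruct IHd as [m [Hm Hm']]; [intros; apply H; lia|].
    exists (Rmin m (g d)). split; [apply Rmin_glb_lt; auto; apply H; lia|].
    intros i Hi. destruct (Nat.eq_dec i d); [subst; apply Rmin_r|].
    eapply Rle_trans; [apply Rmin_l|]. apply Hm'; lia.
Qed.

Lemma INR_lt_pow2 n : INR n < 2 ^ n.
Proof. induction n. simpl; lra. rewrite S_INR. change (2 ^ S n) with (2 * 2 ^ n). assert (1 <= 2 ^ n) by (apply pow_R1_Rle; lra). lra. Qed.

Lemma halving w rho : 0 <= w -> 0 < rho -> exists n, forall t, (n <= t)%nat -> w / 2 ^ t < rho.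
Proof.
  intros Hw Hr. destruct (archimed (w / rho)) as [H1 _].
  assert (Hpos : (0 <= up (w / rho))%Z).
  { apply le_IZR. assert (0 <= w / rho) by (unfold Rdiv; apply Rmult_le_pos; [lra|left; apply Rinv_0_lt_compat; lra]). simpl. lra. }
  exists (Z.to_nat (up (w / rho))). intros t Ht.
  assert (E : INR (Z.to_nat (up (w / rho))) = IZR (up (w / rho))) by (rewrite INR_IZR_INZ, Z2Nat.id; auto).
  pose proof (INR_lt_pow2 (Z.to_nat (up (w / rho)))).
  pose proof (Rle_pow 2 _ _ ltac:(lra) Ht).
  assert (P : 0 < 2 ^ t) by (apply pow_lt; lra).
  apply Rmult_lt_reg_r with (2 ^ t); auto. unfold Rdiv. rewrite Rmult_assoc, Rinv_l by lra. rewrite Rmult_1_r.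
  assert (w / rho < 2 ^ t) by lra.
  apply Rmult_lt_reg_r with (/ rho). apply Rinv_0_lt_compat; auto.
  replace (rho * 2 ^ t * / rho) with (2 ^ t) by (field; lra). exact H2.
Qed.

Lemma finite_max_nat (P : nat -> nat -> Prop) d :
  (forall i, (i < d)%nat -> exists t, forall t', (t <= t')%nat -> P i t') ->
  exists t, forall i, (i < d)%nat -> P i t.
Proof.
  intros H. assert (forall d', (d' <= d)%nat -> exists t, forall i, (i < d')%nat -> forall t', (t <= t')%nat -> P i t').
  { induction d'; intros Hd. exists 0%nat; intros; lia.
    destruct (IHd' ltac:(lia)) as [t1 Ht1]. destruct (H d' ltac:(lia)) as [t2 Ht2].
    exists (Nat.max t1 t2). intros i Hi t' Ht'. destruct (Nat.eq_dec i d'). subst; apply Ht2; lia. apply Ht1; lia. }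
  destruct (H0 d ltac:(lia)) as [t Ht]. exists t. intros. apply Ht; auto.
Qed.


Lemma compact_box d lo hi a b : (forall i, a i <= b i) ->
  (forall x, in_box d a b x -> exists j, in_obox d (lo j) (hi j) x) ->
  exists n, forall x, in_box d a b x -> exists j, (j < n)%nat /\ in_obox d (lo j) (hi j) x.
Proof.
  intros Hab Hcov. apply NNPP; intro Hn.
  set (p := (a, b)).
  assert (NF0 : NF d lo hi p).
  { intro n. apply NNPP; intro H. apply Hn. exists n. intros x Hx. apply NNPP; intro H2. apply H.
    exists x. split; auto. intros j Hj Hin. apply H2. exists j; auto. }
  assert (G : good p) by (intro j; apply Hab).
  pose proof (seqK_props d lo hi p G) as Props.
  set (A := fun t => fst (seqK d lo hi t p)). set (B := fun t => snd (seqK d lo hi t p)).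
  assert (Mono : forall s k j, A s j <= A (s + k)%nat j /\ B (s + k)%nat j <= B s j).
  { intros s k j. induction k. rewrite Nat.add_0_r. lra.
    destruct (Props (s + k)%nat) as [_ [M _]]. specialize (M j). rewrite Nat.add_succ_r. unfold A, B in *. lra. }
  assert (Cross : forall s t j, A s j <= B t j).
  { intros s t j. destruct (Props (Nat.max s t)) as [Gm _].
    destruct (Mono s (Nat.max s t - s)%nat j) as [M1 _]. destruct (Mono t (Nat.max s t - t)%nat j) as [_ M2].
    replace (s + (Nat.max s t - s))%nat with (Nat.max s t) in M1 by lia.
    replace (t + (Nat.max s t - t))%nat with (Nat.max s t) in M2 by lia.
    specialize (Gm j). unfold A, B in *. lra. }
  assert (X : forall j, {m | is_lub (fun v => exists t, v = A t j) m}).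
  { intro j. apply completeness. exists (B 0%nat j). intros v [t Hvt]; rewrite Hvt; apply Cross. exists (A 0%nat j), 0%nat. auto. }
  set (x := fun j => proj1_sig (X j)).
  assert (Hx1 : forall t j, A t j <= x j).
  { intros t j. unfold x. destruct (proj2_sig (X j)) as [Hm _]. apply Hm. exists t; auto. }
  assert (Hx2 : forall t j, x j <= B t j).
  { intros t j. unfold x. destruct (proj2_sig (X j)) as [_ Hm]. apply Hm. intros v [s Hvs]; rewrite Hvs; apply Cross. }
  destruct (Hcov x) as [j0 Hj0].
  { intros i Hi. split; [apply (Hx1 0%nat)|apply (Hx2 0%nat)]. }
  destruct (finite_max_nat (fun i t => (b i - a i) / 2 ^ t < Rmin (x i - lo j0 i) (hi j0 i - x i)) d) as [t Ht].
  { intros i Hi. apply halving. specialize (Hab i); lra. specialize (Hj0 i Hi). apply Rmin_glb_lt; lra. }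
  destruct (Props t) as [_ [_ [W N]]]. specialize (N NF0 (S j0)). destruct N as [y [Hy Hnot]].
  apply (Hnot j0 ltac:(lia)). intros i Hi. specialize (Ht i Hi). specialize (W i Hi). specialize (Hy i Hi).
  specialize (Hx1 t i). specialize (Hx2 t i). fold (A t) (B t) in Hy, W. simpl in W.
  pose proof (Rmin_l (x i - lo j0 i) (hi j0 i - x i)). pose proof (Rmin_r (x i - lo j0 i) (hi j0 i - x i)).
  split; lra.
Qed.


Lemma sumN_sumf f n : sumN f (S n) = sum_f_R0 f n.
Proof. induction n. simpl; lra. change (sumN f (S (S n))) with (sumN f (S n) + f (S n)). rewrite IHn. reflexivity. Qed.

Lemma sumN_geom e n : sumN (fun j => e / 2 ^ (S (S j))) n = e / 2 - e / 2 ^ (S n).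
Proof. induction n. simpl. field. change (sumN (fun j => e / 2 ^ (S (S j))) (S n)) with (sumN (fun j => e / 2 ^ (S (S j))) n + e / 2 ^ (S (S n))). rewrite IHn. simpl. field. apply pow_nonzero; lra. Qed.

Lemma box_not_null d a b Sx : (forall i, a i < b i) -> (forall x, in_box d a b x -> Sx x) -> ~ Defs.null_set d Sx.
Proof.
  intros Hab HS Hnull. set (V := vol d a b).
  assert (HV : 0 < V) by (apply vol_pos; intros; apply Hab).
  destruct (Hnull V HV) as [Aj [Bj [Hcov [s [Hs Hsum]]]]].
  set (eps := V - s).
  assert (Heps : 0 < eps) by (unfold eps; lra).
  assert (Heta : forall j, {eta | 0 < eta /\ vol d (fun i => Aj j i - eta) (fun i => Bj j i + eta) <= vol d (Aj j) (Bj j) + eps / 2 ^ (S (S j))}).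
  { intro j. apply constructive_indefinite_description.
    destruct (enlarge d (Aj j) (Bj j) (eps / 2 ^ (S (S j)))) as [eta [He H]].
    { apply Rdiv_lt_0_compat; auto. apply pow_lt; lra. }
    exists eta. split; auto. apply H; lra. }
  set (eta := fun j => proj1_sig (Heta j)).
  assert (Heta1 : forall j, 0 < eta j) by (intro j; unfold eta; destruct (proj2_sig (Heta j)); auto).
  assert (Heta2 : forall j, vol d (fun i => Aj j i - eta j) (fun i => Bj j i + eta j) <= vol d (Aj j) (Bj j) + eps / 2 ^ (S (S j)))
    by (intro j; unfold eta; destruct (proj2_sig (Heta j)); auto).
  set (lo := fun j i => Aj j i - eta j). set (hi := fun j i => Bj j i + eta j).
  destruct (compact_box d lo hi a b) as [n Hn].
  { intros i; specialize (Hab i); lra. }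
  { intros x Hx. destruct (Hcov x (HS x Hx)) as [j Hj]. exists j. intros i Hi. specialize (Hj i Hi).
    specialize (Heta1 j). unfold lo, hi. lra. }
  assert (FC := fin_cover d n lo hi (cnt d n lo hi a b) a b (le_n _)).
  assert (FC' : vol d a b <= sumN (fun j => inter d (lo j) (hi j) a b) n).
  { apply FC. intros x Hx. destruct (Hn x Hx) as [j [Hj Hin]]. exists j. split; auto.
    intros i Hi. specialize (Hin i Hi). lra. }
  assert (T1 : sumN (fun j => inter d (lo j) (hi j) a b) n <= sumN (fun j => vol d (Aj j) (Bj j) + eps / 2 ^ (S (S j))) n).
  { apply sumN_le. intros j Hj. eapply Rle_trans; [|apply Heta2]. unfold inter. apply vol_mono.
    intros i Hi. unfold lo, hi. split; [apply Rmax_r|apply Rmin_r]. }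
  rewrite sumN_plus, sumN_geom in T1.
  assert (T2 : sumN (fun j => vol d (Aj j) (Bj j)) n <= s).
  { destruct n. simpl. specialize (Hsum 0%nat). simpl in Hsum. pose proof (vol_nonneg d (Aj 0%nat) (Bj 0%nat)). lra.
    rewrite sumN_sumf. apply Hsum. }
  assert (T3 : 0 < eps / 2 ^ (S n)) by (apply Rdiv_lt_0_compat; auto; apply pow_lt; lra).
  fold V in FC'. unfold eps in *. lra.
Qed.

Lemma open_meas d G : (1 <= d)%nat -> Defs.open_set d G -> lebesgue_measurable d G.
Proof.
  intros Hd HG eps He. exists G. split; auto. split; auto.
  exists (fun _ _ => 0), (fun _ _ => 0). split.
  - intros x [Gx nGx]. contradiction.
  - exists 0. split; auto. intros n. right. apply sum_eq_R0. intros. apply (vol_zero d _ _ 0%nat); auto. lra.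
Qed.


Theorem theorem3p2 (M : nat) (c : R) (hM : (1 <= M)%nat) (hc : 0 < c) :
  positive_measure (S M)
    (fun Rc : rvec =>
       (forall i, (i <= M)%nat -> -1 < Rc i < 1) /\
       exists r : R, -1 < r < 1 /\ r <> 0 /\
         same_data M (fun _ => c) Rc (S M) (fun _ => c) (extend M Rc r)).
Proof.
  change (positive_measure (S M) (Sset M c)). split.
  - apply open_meas; [lia|]. apply open_S; auto.
  - destruct (open_S M c hc Rstar (Rstar_in M c hM hc)) as [dl [Hdl Hball]].
    apply (box_not_null (S M) (fun i => Rstar i - dl / 2) (fun i => Rstar i + dl / 2)).
    + intros; lra.
    + intros x Hx. apply Hball. intros i Hi. specialize (Hx i Hi). apply Rabs_def1; lra.
Qed.
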